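(* Let $1\le k\le n$ be integers, $\boldsymbol c\in\mathbb{R}^n$, $\theta\in[0,1)$, $\lambda\ge 2$, and $\boldsymbol E\in\mathbb{R}^{n\times d}$ with unit-norm rows satisfying $\boldsymbol e_i^{\mathsf T}\boldsymbol e_j>-1$ for all $i\ne j$. Let $f(\boldsymbol x)=\theta(k-1)\boldsymbol c^{\mathsf T}\boldsymbol x+(1-\theta)\boldsymbol x^{\mathsf T}(\lambda\boldsymbol I-\boldsymbol E\boldsymbol E^{\mathsf T})\boldsymbol x$ and $P=\{\boldsymbol x\in[0,1]^n:\boldsymbol 1^{\mathsf T}\boldsymbol x=k\}$. Consider the Frank--Wolfe iteration with exact line search: given $\boldsymbol x^{(t)}\in P$, let $\boldsymbol s^{(t)}\in\{0,1\}^n$ be the indicator vector of the $k$ largest entries of $\nabla f(\boldsymbol x^{(t)})$, $\boldsymbol d^{(t)}=\boldsymbol s^{(t)}-\boldsymbol x^{(t)}$, $\gamma^{(t)}\in\arg\max_{\gamma\in[0,1]}f(\boldsymbol x^{(t)}+\gamma\boldsymbol d^{(t)})$, and $\boldsymbol x^{(t+1)}=\boldsymbol x^{(t)}+\gamma^{(t)}\boldsymbol d^{(t)}$. Let $\boldsymbol x^\ast\in\{0,1\}^n\cap P$ be an integral local maximizer of $f$ on $P$. Then there exists a neighborhood $\mathcal N(\boldsymbol x^\ast)$ of $\boldsymbol x^\ast$ such that, whenever an iterate $\boldsymbol x^{(t)}\in P\cap\mathcal N(\boldsymbol x^\ast)$ with $\boldsymbol x^{(t)}\ne\boldsymbol x^\ast$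 occurs, the top-$k$ indicator $\boldsymbol s^{(t)}$ is uniquely determined and equals $\boldsymbol x^\ast$, the exact line search returns $\gamma^{(t)}=1$ (uniquely), and hence $\boldsymbol x^{(t+1)}=\boldsymbol x^\ast$.
   Context: A local maximizer of $f$ on $P$ is a point $\boldsymbol x^\ast\in P$ with $f(\boldsymbol x)\le f(\boldsymbol x^\ast)$ for all $\boldsymbol x\in P$ near $\boldsymbol x^\ast$. The exact line search maximizes the one-dimensional quadratic $\gamma\mapsto f(\boldsymbol x^{(t)}+\gamma\boldsymbol d^{(t)})$ over $[0,1]$. *)

(* Defs.v *)
From HB Require Import structures.
From mathcomp Require Import all_boot all_order all_algebra.
From mathcomp Require Import reals.
Set Implicit Arguments. Unset Strict Implicit. Unset Printing Implicit Defensive.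
Import Order.TTheory GRing.Theory Num.Theory.
Local Open Scope ring_scope.

Section Defs.
Variables (R : realType) (n d : nat).

Definition sc (A : 'M[R]_1) : R := A 0 0.

Definition Qmat (lam : R) (E : 'M[R]_(n, d)) : 'M[R]_n := lam%:M - E *m E^T.

Definition fobj (k : nat) (c : 'cV[R]_n) (theta lam : R) (E : 'M[R]_(n, d))
  (x : 'cV[R]_n) : R :=
  theta * (k%:R - 1) * sc (c^T *m x) + (1 - theta) * sc (x^T *m Qmat lam E *m x).

Definition gradf (k : nat) (c : 'cV[R]_n) (theta lam : R) (E : 'M[R]_(n, d))
  (x : 'cV[R]_n) : 'cV[R]_n :=
  (theta * (k%:R - 1)) *: c + (1 - theta) *: ((Qmat lam E + (Qmat lam E)^T) *m x).

Definition inP (k : nat) (x : 'cV[R]_n) : Prop :=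
  (forall i, 0 <= x i 0 <= 1) /\ \sum_i x i 0 = k%:R.

Definition binary (x : 'cV[R]_n) : Prop := forall i, x i 0 = 0 \/ x i 0 = 1.

Definition near_vec (r : R) (x y : 'cV[R]_n) : Prop :=
  forall i, `|x i 0 - y i 0| < r.

Definition local_max_on_P (k : nat) (g : 'cV[R]_n -> R) (xs : 'cV[R]_n) : Prop :=
  inP k xs /\ exists2 r : R, 0 < r &
    forall x, inP k x -> near_vec r x xs -> g x <= g xs.

Definition topk_indicator (k : nat) (g s : 'cV[R]_n) : Prop :=
  binary s /\ \sum_i s i 0 = k%:R /\
  forall i j, s i 0 = 1 -> s j 0 = 0 -> g j 0 <= g i 0.

Definition argmax01 (phi : R -> R) (gamma : R) : Prop :=
  0 <= gamma <= 1 /\ forall g', 0 <= g' <= 1 -> phi g' <= phi gamma.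

End Defs.

(* Main.v *)
Require Import Defs.
From HB Require Import structures.
From mathcomp Require Import all_boot all_order all_algebra.
From mathcomp Require Import reals ring lra.
Set Implicit Arguments. Unset Strict Implicit. Unset Printing Implicit Defensive.
Import Order.TTheory GRing.Theory Num.Theory.
Local Open Scope ring_scope.

Section H.
Variables (R : realType) (n : nat).
Implicit Types (u v w : 'cV[R]_n) (Q : 'M[R]_n).

Lemma scD (A B : 'M[R]_1) : sc (A + B) = sc A + sc B.
Proof. by rewrite /sc mxE. Qed.
Lemma scZ s (A : 'M[R]_1) : sc (s *: A) = s * sc A.
Proof. by rewrite /sc mxE. Qed.
Lemma scT (A : 'M[R]_1) : sc A^T = sc A.
Proof. by rewrite /sc mxE. Qed.

Definition B Q u v := sc (u^T *m Q *m v).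
Definition L u v := sc (u^T *m v).

Lemma BDl Q u v w : B Q (u + v) w = B Q u w + B Q v w.
Proof. by rewrite /B linearD /= !mulmxDl scD. Qed.
Lemma BDr Q u v w : B Q w (u + v) = B Q w u + B Q w v.
Proof. by rewrite /B mulmxDr scD. Qed.
Lemma BZl Q s u w : B Q (s *: u) w = s * B Q u w.
Proof. by rewrite /B linearZ /= -!scalemxAl scZ. Qed.
Lemma BZr Q s u w : B Q w (s *: u) = s * B Q w u.
Proof. by rewrite /B -!scalemxAr scZ. Qed.
Lemma LDr u v w : L w (u + v) = L w u + L w v.
Proof. by rewrite /L mulmxDr scD. Qed.
Lemma LZr s u w : L w (s *: u) = s * L w u.
Proof. by rewrite /L -!scalemxAr scZ. Qed.
Lemma BT Q u v : sc (u^T *m Q^T *m v) = B Q v u.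
Proof. by rewrite -scT !trmx_mul !trmxK mulmxA. Qed.
End H.
Section H.
Variables (R : realType) (n d : nat).
Implicit Types (u v w x y : 'cV[R]_n).
Variables (k : nat) (c : 'cV[R]_n) (theta lam : R) (E : 'M[R]_(n, d)).
Let Q := Qmat lam E.
Let a := theta * (k%:R - 1).
Let b := 1 - theta.

Lemma fobjE x : fobj k c theta lam E x = a * L c x + b * B Q x x.
Proof. by []. Qed.

Lemma dotgrad m w : L (gradf k c theta lam E m) w = a * L c w + b * (B Q m w + B Q w m).
Proof.
rewrite /L /gradf linearD /= !linearZ /= mulmxDl -!scalemxAl scD !scZ.
rewrite trmx_mul linearD /= trmxK mulmxDr mulmxDl scD.
rewrite -!mulmxA !mulmxA BT /B -/Q /a /b; ring.
Qed.

Lemma fexp y w : fobj k c theta lam E (y + w) =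
  fobj k c theta lam E y + a * L c w + b * (B Q y w + B Q w y + B Q w w).
Proof. rewrite !fobjE LDr !BDl !BDr /a /b; ring. Qed.

Lemma line_ident x D g :
  fobj k c theta lam E (x + 1 *: D) - fobj k c theta lam E (x + g *: D) =
  (1 - g) * L (gradf k c theta lam E (x + ((1 + g) / 2) *: D)) D.
Proof.
have e1 : x + 1 *: D = (x + g *: D) + (1 - g) *: D.
  by apply/matrixP=> i j; rewrite !mxE; ring.
have e2 : x + ((1 + g) / 2) *: D = (x + g *: D) + (2^-1 * (1 - g)) *: D.
  by apply/matrixP=> i j; rewrite !mxE; field.
rewrite e1 e2 fexp dotgrad !BDl !BDr !BZl !BZr !LZr /a /b; by field.
Qed.
End H.
Section H.
Variables (R : realType) (n : nat).
Implicit Types (u v w x y : 'cV[R]_n).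

Lemma LE u v : L u v = \sum_i u i 0 * v i 0.
Proof. by rewrite /L /sc mxE; apply: eq_bigr => i _; rewrite mxE. Qed.

Lemma Ldelta u j : L u (delta_mx j 0) = u j 0.
Proof. by rewrite /L -colE /sc !mxE. Qed.

Lemma Bdelta (Q : 'M[R]_n) i j : B Q (delta_mx i 0) (delta_mx j 0) = Q i j.
Proof. by rewrite /B trmx_delta -rowE -colE /sc !mxE. Qed.

Lemma pos_sum (g D : 'I_n -> R) (S : pred 'I_n) i0 :
  S i0 -> (forall i j, S i -> ~~ S j -> g j < g i) ->
  (forall i, S i -> 0 <= D i) -> (forall j, ~~ S j -> D j <= 0) ->
  \sum_i D i = 0 -> (exists p, D p != 0) -> 0 < \sum_i g i * D i.
Proof.
move=> Si0 gap Dp Dn D0 [p Dp0].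
set tau := \big[Order.min/g i0]_(i | S i) g i.
have tle : forall i, S i -> tau <= g i := fun i Si => bigmin_le_cond _ _ Si.
have tgt : forall j, ~~ S j -> g j < tau.
  move=> j Sj; apply/bigmin_gtP; split; [exact: gap | move=> i Si; exact: gap].
have -> : \sum_i g i * D i = \sum_i (g i - tau) * D i.
  rewrite [RHS](eq_bigr (fun i => g i * D i - tau * D i)); last by move=> i _; rewrite mulrBl.
  by rewrite sumrB -mulr_sumr D0 mulr0 subr0.
have tnn : forall i, 0 <= (g i - tau) * D i.
  move=> i; case Si: (S i).
    by apply: mulr_ge0; [rewrite subr_ge0 tle | exact: Dp].
  apply: mulr_le0; first by rewrite subr_le0 ltW // tgt ?Si.
  by apply: Dn; rewrite Si.
have sge : 0 <= \sum_i (g i - tau) * D i by apply: sumr_ge0 => i _; exact: tnn.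
rewrite lt_neqAle sge andbT.
rewrite eq_sym; apply/negP => /eqP H.
have H' := psumr_eq0P (fun i _ => tnn i) H.
have Dn0 : forall j, ~~ S j -> D j = 0.
  move=> j Sj; have /eqP := H' j isT; rewrite mulf_eq0 => /orP[|/eqP //].
  by rewrite subr_eq0 => /eqP e; have := tgt j Sj; rewrite e ltxx.
have Dz : \sum_(i | ~~ S i) D i = 0 by apply: big1 => j /Dn0.
move: D0; rewrite (bigID S) /= Dz addr0 => D0.
have Ds0 := psumr_eq0P (P := S) (fun i Si => Dp i Si) D0.
by move/eqP: Dp0; apply; case Sp: (S p); [exact: Ds0 | apply: Dn0; rewrite Sp].
Qed.

Lemma bin_eq (s t : 'cV[R]_n) : binary s -> binary t ->
  \sum_i s i 0 = \sum_i t i 0 ->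
  (forall j, s j 0 = 0 -> t j 0 = 1 -> False) -> forall p, s p 0 = t p 0.
Proof.
move=> bs bt sst H.
have le : forall j, 0 <= s j 0 - t j 0.
  move=> j; have [et|et] := bt j; have [e|e] := bs j; rewrite et e ?subr0 ?subrr //.
  by exfalso; exact: H j e et.
have : \sum_i (s i 0 - t i 0) = 0 by rewrite sumrB sst subrr.
move/(psumr_eq0P (fun i _ => le i)) => z p; apply/eqP; rewrite -subr_eq0; apply/eqP.
exact: z.
Qed.

Lemma rowsum_bound (M : 'M[R]_n) (v : 'cV[R]_n) r i : 0 < r ->
  (forall j, `|v j 0| < r) ->
  `|\sum_j M i j * v j 0| <= (\sum_i' \sum_j `|M i' j|) * r.
Proof.
move=> r0 hv; apply: le_trans (ler_norm_sum _ _ _) _.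
apply: le_trans (_ : \sum_j `|M i j| * r <= _).
  by apply: ler_sum => j _; rewrite normrM ler_wpM2l // ltW.
rewrite -mulr_suml; apply: ler_wpM2r; first exact: ltW.
rewrite [X in _ <= X](bigD1 i) //= lerDl.
by apply: sumr_ge0 => i' _; apply: sumr_ge0.
Qed.
End H.
Lemma sumdelta (R : realType) n (j : 'I_n) : \sum_l (delta_mx j 0 : 'cV[R]_n) l 0 = 1.
Proof.
rewrite (bigD1 j) //= mxE !eqxx /= big1 ?addr0 // => l /negbTE nl.
by rewrite mxE nl.
Qed.

Lemma gramE (R : realType) n d (E : 'M[R]_(n, d)) a b :
  sc (row a E *m (row b E)^T) = (E *m E^T) a b.
Proof. by rewrite /sc !mxE; apply: eq_bigr => l _; rewrite !mxE. Qed.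

Lemma gradE (R : realType) n d k c theta lam (E : 'M[R]_(n, d)) (y : 'cV[R]_n) i :
  gradf k c theta lam E y i 0 = theta * (k%:R - 1) * c i 0 +
    (1 - theta) * \sum_l (Qmat lam E + (Qmat lam E)^T) i l * y l 0.
Proof.
rewrite /gradf.
move: (Qmat lam E + (Qmat lam E)^T) => M.
by rewrite !mxE.
Qed.

Lemma sum_sub (R : realType) n (u v : 'cV[R]_n) : \sum_i (u - v) i 0 = \sum_i u i 0 - \sum_i v i 0.
Proof. by rewrite -sumrB; apply: eq_bigr => i _; rewrite !mxE. Qed.

Lemma gap_at (R : realType) n d k c (theta lam : R) (E : 'M[R]_(n, d)) (xs : 'cV[R]_n) :
  0 <= theta < 1 -> 2 <= lam ->
  (forall i, sc (row i E *m (row i E)^T) = 1) ->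
  (forall i j, i != j -> - 1 < sc (row i E *m (row j E)^T)) ->
  local_max_on_P k (fobj k c theta lam E) xs ->
  forall i j, xs i 0 = 1 -> xs j 0 = 0 ->
  gradf k c theta lam E xs j 0 < gradf k c theta lam E xs i 0.
Proof.
move=> /andP[th0 th1] lam2 Ed Eo [[xsP xsum] [r0 r0p lmax]] i j xi xj.
have nij : i != j by apply/eqP => e; move: xi; rewrite e xj => /eqP; rewrite eq_sym oner_eq0.
set dv : 'cV[R]_n := delta_mx j 0 + (-1) *: delta_mx i 0.
set t := Num.min 1 (r0 / 2).
have t0 : 0 < t by rewrite lt_min ltr01 divr_gt0.
have t1 : t <= 1 by rewrite ge_min lexx.
have tr : t < r0.
  apply: le_lt_trans (_ : r0 / 2 < r0); first by rewrite ge_min lexx orbT.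
  lra.
have dvE : forall l, dv l 0 = (l == j)%:R - (l == i)%:R.
  by move=> l; rewrite !mxE !andbT; ring.
have hP : inP k (xs + t *: dv).
  split.
    move=> l; rewrite !mxE.
    have := xsP l; rewrite !andbT.
    case lj: (l == j); case li: (l == i) => /=.
    - by move: nij; rewrite -(eqP lj) -(eqP li) eqxx.
    - rewrite (eqP lj) xj; move=> _; apply/andP; split; lra.
    - rewrite (eqP li) xi; move=> _; apply/andP; split; lra.
    - move=> /andP[? ?]; apply/andP; split; lra.
  have -> : \sum_l (xs + t *: dv) l 0 = \sum_l xs l 0 + t * (\sum_l (delta_mx j 0 : 'cV[R]_n) l 0 - \sum_l (delta_mx i 0 : 'cV[R]_n) l 0).
    rewrite -sumrB mulr_sumr -big_split /=; apply: eq_bigr => l _; rewrite !mxE; ring.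
  by rewrite !sumdelta xsum; ring.
have hN : near_vec r0 (xs + t *: dv) xs.
  move=> l; have -> : (xs + t *: dv) l 0 - xs l 0 = t * dv l 0 by rewrite !mxE; ring.
  rewrite normrM (gtr0_norm t0) dvE.
  apply: le_lt_trans tr; apply: ler_piMr; first exact: ltW.
  by case: (l == j); case: (l == i); rewrite /= ?subrr ?subr0 ?sub0r ?normrN ?normr0 ?normr1.
have le := lmax _ hP hN.
move: le; rewrite fexp.
have Lg : L (gradf k c theta lam E xs) dv = gradf k c theta lam E xs j 0 - gradf k c theta lam E xs i 0.
  by rewrite LDr LZr !Ldelta; ring.
move: Lg; rewrite dotgrad => Lg.
have Bdd : 0 < B (Qmat lam E) dv dv.
  have Qe : forall a b, Qmat lam E a b = lam *+ (a == b) - sc (row a E *m (row b E)^T).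
    by move=> a b; rewrite gramE /Qmat !mxE.
  rewrite !BDl !BDr !BZl !BZr !Bdelta !Qe !eqxx (negbTE nij) eq_sym (negbTE nij) /= !Ed.
  have h1 := Eo _ _ nij; rewrite eq_sym in nij; have h2 := Eo _ _ nij.
  lra.
rewrite !LZr !BZl !BZr => le.
set G := gradf k c theta lam E xs j 0 - gradf k c theta lam E xs i 0 in Lg.
rewrite -subr_lt0.
have bp : 0 < 1 - theta by lra.
set bb := B (Qmat lam E) dv dv in Bdd le.
have : t * (G + (1 - theta) * t * bb) <= 0.
  rewrite -Lg.
  set F := fobj k c theta lam E xs in le *.
  set P1 := L c dv in le *; set P2 := B (Qmat lam E) xs dv in le *.
  set P3 := B (Qmat lam E) dv xs in le *.
  move: le; set LHS := (X in X <= F).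
  have -> : LHS = F + t * (theta * (k%:R - 1) * P1 + (1 - theta) * (P2 + P3) + (1 - theta) * t * bb).
    rewrite /LHS; ring.
  lra.
rewrite pmulr_rle0 // => h.
have : 0 < (1 - theta) * t * bb by rewrite !mulr_gt0.
rewrite /G in h; lra.
Qed.

Lemma subE (R : realType) n (u v : 'cV[R]_n) i : (u - v) i 0 = u i 0 - v i 0.
Proof. by rewrite !mxE. Qed.

Unset Implicit Arguments.
Theorem theorem4 (R : realType) (n d k : nat) (c : 'cV[R]_n) (theta lam : R)
  (E : 'M[R]_(n, d)) (xs : 'cV[R]_n) :
  (1 <= k)%N -> (k <= n)%N ->
  0 <= theta < 1 -> 2 <= lam ->
  (forall i, sc (row i E *m (row i E)^T) = 1) ->
  (forall i j, i != j -> - 1 < sc (row i E *m (row j E)^T)) ->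
  binary xs -> local_max_on_P k (fobj k c theta lam E) xs ->
  exists2 r : R, 0 < r &
    forall x : 'cV[R]_n, inP k x -> near_vec r x xs -> x != xs ->
      (topk_indicator k (gradf k c theta lam E x) xs /\
       forall s, topk_indicator k (gradf k c theta lam E x) s -> s = xs) /\
      (forall gamma, argmax01 (fun g => fobj k c theta lam E (x + g *: (xs - x))) gamma
                     <-> gamma = 1) /\
      x + 1 *: (xs - x) = xs.
Proof.
move=> k1 kn thb lam2 Ed Eo bxs lm.
have gap := gap_at thb lam2 Ed Eo lm.
have [[xsP xsum] _] := lm.
move: thb => /andP[th0 th1].
have bp : 0 < 1 - theta by lra.
set g0 := gradf k c theta lam E xs in gap.
set M := Qmat lam E + (Qmat lam E)^T.
set Ks := \sum_i \sum_j `|M i j|.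
have Ks0 : 0 <= Ks by apply: sumr_ge0 => i _; apply: sumr_ge0.
set del := \big[Order.min/1]_(p : 'I_n * 'I_n | (xs p.1 0 == 1) && (xs p.2 0 == 0))
             (g0 p.1 0 - g0 p.2 0).
have del0 : 0 < del.
  apply/bigmin_gtP; split=> // -[i j] /andP[/eqP h1 /eqP h2] /=.
  by rewrite subr_gt0; exact: gap.
have delle : forall i j, xs i 0 = 1 -> xs j 0 = 0 -> del <= g0 i 0 - g0 j 0.
  move=> i j h1 h2.
  have := @bigmin_le_cond _ _ _ 1 (i, j) (fun p : 'I_n * 'I_n => (xs p.1 0 == 1) && (xs p.2 0 == 0))
    (fun p : 'I_n * 'I_n => g0 p.1 0 - g0 p.2 0).
  by rewrite /= h1 h2 !eqxx; apply.
set r := del / (4 * ((1 - theta) * (Ks + 1))).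
have Ks1 : 0 < Ks + 1 by lra.
have r0 : 0 < r by rewrite /r divr_gt0 // mulr_gt0 // mulr_gt0.
have rE : (1 - theta) * ((Ks + 1) * r) = del / 4.
  rewrite /r; field; apply/andP; split; rewrite ?lt0r_neq0 //; lra.
have near_gap : forall y, near_vec r y xs -> forall i j, xs i 0 = 1 -> xs j 0 = 0 ->
    gradf k c theta lam E y j 0 < gradf k c theta lam E y i 0.
  move=> y hy i j h1 h2.
  have dev : forall l, `|gradf k c theta lam E y l 0 - g0 l 0| <= del / 4.
    move=> l.
    have -> : gradf k c theta lam E y l 0 - g0 l 0 =
              (1 - theta) * \sum_m M l m * (y - xs) m 0.
      rewrite /g0 !gradE -/M.
      rewrite [in RHS](eq_bigr (fun m => M l m * y m 0 - M l m * xs m 0)); last first.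
        by move=> m _; rewrite subE mulrBr.
      rewrite sumrB; ring.
    rewrite normrM (gtr0_norm bp).
    have hv : forall m, `|(y - xs) m 0| < r by move=> m; rewrite subE; exact: hy.
    apply: le_trans (ler_wpM2l (ltW bp) (rowsum_bound M l r0 hv)) _.
    rewrite -/Ks -rE; apply: ler_wpM2l; first exact: ltW.
    apply: ler_wpM2r; [exact: ltW | lra].
  have := dev i; have := dev j; have := delle i j h1 h2; rewrite !ler_norml.
  move=> a /andP[b1 b2] /andP[c1 c2]; lra.
have [i0 hi0] : exists i0, xs i0 0 = 1.
  case: (boolP [exists i, xs i 0 == 1]) => [/existsP[i0 /eqP h] | /existsPn H].
    by exists i0.
  exfalso; move: xsum; rewrite big1 => [e|i _].
    by move: k1; rewrite -(ler_nat R) -e; lra.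
  by have := H i; case: (bxs i) => -> //; rewrite eqxx.
exists r => // x xP xn xne.
have gx := near_gap x xn.
have xs01 : forall j, xs j 0 != 1 -> xs j 0 = 0.
  by move=> j; case: (bxs j) => -> //; rewrite eqxx.
split.
  split.
    split=> //; split=> // i j h1 h2; apply: ltW; exact: gx.
  move=> s [bs [ss sg]]; apply/matrixP => i j; rewrite (ord1 j).
  apply: (bin_eq bs bxs) => [|l sl xl]; first by rewrite ss xsum.
  case: (boolP [exists i, (s i 0 == 1) && (xs i 0 == 0)]).
    move/existsP => [i' /andP[/eqP si /eqP xi]].
    have := sg i' l si sl; have := gx l i' xl xi; lra.
  move/existsPn => H.
  have := bin_eq bxs bs _ _ l; rewrite sl xl.
  move=> h; have : (1 : R) = 0 by apply: h => [|j0 xj sj]; [rewrite ss xsum | move: (H j0); rewrite sj xj !eqxx].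
  by move/eqP; rewrite oner_eq0.
have key : forall g, 0 <= g -> g < 1 ->
    fobj k c theta lam E (x + g *: (xs - x)) < fobj k c theta lam E (x + 1 *: (xs - x)).
  move=> g g0' g1; rewrite -subr_gt0 line_ident; apply: mulr_gt0; first lra.
  set mid := x + ((1 + g) / 2) *: (xs - x).
  have mn : near_vec r mid xs.
    move=> l; have -> : mid l 0 - xs l 0 = (x l 0 - xs l 0) * ((1 - g) / 2).
      by rewrite !mxE; field.
    rewrite normrM; apply: le_lt_trans (xn l).
    rewrite (ger0_norm (_ : 0 <= (1 - g) / 2)); last lra.
    apply: ler_piMr; [exact: normr_ge0 | lra].
  rewrite LE (eq_bigr (fun i => gradf k c theta lam E mid i 0 * (xs i 0 - x i 0))); last first.
    by move=> i _; rewrite subE.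
  have [xP1 xP2] := xP.
  apply: (pos_sum (S := fun i => xs i 0 == 1) (i0 := i0)).
  - by rewrite /= hi0.
  - move=> i j /eqP h1 h2; exact: (near_gap _ mn i j h1 (xs01 j h2)).
  - by move=> i /eqP ->; have := xP1 i; lra.
  - by move=> j /xs01 ->; have := xP1 j; lra.
  - by rewrite sumrB xsum xP2 subrr.
  - case: (boolP [exists p, x p 0 != xs p 0]) => [/existsP[p hp] | /existsPn H].
      by exists p; rewrite subr_eq0 eq_sym.
    exfalso; move/eqP: xne; apply; apply/matrixP => i j; rewrite (ord1 j).
    by apply/eqP; move: (H i); rewrite negbK.
split; last by rewrite scale1r addrC subrK.
move=> g; split.
  move=> [/andP[g0' g1] hmax].
  case: (ltP g 1) => h; last lra.
  have := key g g0' h; have := hmax 1; rewrite ler01 lexx => /(_ isT); lra.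
move=> ->; split; first by rewrite ler01 lexx.
move=> g' /andP[h0 h1]; case: (ltP g' 1) => h; first exact/ltW/key.
by have -> : g' = 1 by lra.
Qed.
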